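(* Let $\mathbb{C}$ be an action representable category and let $\mathbb{X}$ be a Birkhoff subcategory of $\mathbb{C}$. Suppose there exist monomorphisms $m:S\to B$ and $m':S\to B'$ in $\mathbb{X}$, monomorphisms $u:B\to D$ and $u':B'\to D$ in $\mathbb{C}$, an object $X$ of $\mathbb{X}$ and a monomorphism $v:D\to [X]$ in $\mathbb{C}$ such that (i) $um=u'm'$; (ii) $m$ and $m'$ cannot be amalgamated in $\mathbb{X}$; (iii) the split extensions (with kernel $X$) corresponding to the morphisms $vu:B\to[X]$ and $vu':B'\to[X]$ under the representation of $\mathrm{SplExt}(-,X)$ in $\mathbb{C}$ lie in $\mathbb{X}$ (i.e. all their objects belong to $\mathbb{X}$). Then $\mathbb{X}$ is not weakly action representable (and hence not action representable).
   Context: Composition is written right to left. $\mathbb{C}$ is a pointed protomodular category with finite limits (e.g. semi-abelian). A split extension of $B$ with kernel $X$ is a diagram $X\xrightarrow{\kappa}A\underset{\beta}{\overset{\alpha}{\rightleftarrows}}B$ with $\kappa$ the kernel of $\alpha$ and $\alpha\beta=1_B$. For each object $X$, $\mathrm{SplExt}(-,X):\mathbb{C}^{op}\to\mathbf{Set}$ sends $B$ to the set of isomorphism classes of split extensions of $B$ with kernel $X$, and acts on morphisms $p:E\to B$ by pulling back along $p$. $\mathbb{C}$ is action representable if each $\mathrm{SplExt}(-,X)$ is representable; the representing object is denoted $[X]$, so morphisms $B\to[X]$ correspond to isomorphism classes of split extensions of $B$ with kernel $X$. A category is weakly action representable if for each $X$ there is an object $M$ and a monomorphism of functors $\mathrm{SplExt}(-,X)\to\hom(-,M)$.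 A Birkhoff subcategory is a full reflective subcategory closed under subobjects and regular quotients. Two monomorphisms $m:S\to B$, $m':S\to B'$ can be amalgamated in a category if there exist monomorphisms $i:B\to M$, $i':B'\to M$ in that category with $im=i'm'$. *)

(* Defs.v *)
Set Implicit Arguments.
Unset Strict Implicit.

Record Cat := {
  Ob :> Type;
  Hom : Ob -> Ob -> Type;
  idm : forall a, Hom a a;
  comp : forall a b c, Hom b c -> Hom a b -> Hom a c;
  comp_assoc : forall a b c d (h : Hom c d) (g : Hom b c) (f : Hom a b),
      comp h (comp g f) = comp (comp h g) f;
  comp_id_l : forall a b (f : Hom a b), comp (idm b) f = f;
  comp_id_r : forall a b (f : Hom a b), comp f (idm a) = f
}.

Arguments Hom {C} a b : rename.
Arguments idm {C} a : rename.
Arguments comp {C a b c} g f : rename.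
Notation "g \o f" := (comp g f) (at level 40, left associativity).

Section Notions.
Variable C : Cat.

Definition Mono {a b : C} (f : Hom a b) : Prop :=
  forall (z : C) (g h : Hom z a), f \o g = f \o h -> g = h.

Definition IsIso {a b : C} (f : Hom a b) : Prop :=
  exists g : Hom b a, g \o f = idm a /\ f \o g = idm b.

Definition IsTerminal (t : C) : Prop :=
  forall a : C, exists f : Hom a t, forall g : Hom a t, g = f.

Definition IsInitial (i : C) : Prop :=
  forall a : C, exists f : Hom i a, forall g : Hom i a, g = f.

Definition IsZeroObj (z : C) : Prop := IsInitial z /\ IsTerminal z.

Definition Pointed : Prop := exists z : C, IsZeroObj z.

Definition IsZeroMor {a b : C} (f : Hom a b) : Prop :=
  exists (z : C) (g : Hom a z) (h : Hom z b), IsZeroObj z /\ f = h \o g.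

Definition IsKernel {K A B : C} (k : Hom K A) (f : Hom A B) : Prop :=
  IsZeroMor (f \o k) /\
  forall (Z : C) (g : Hom Z A), IsZeroMor (f \o g) ->
    exists h : Hom Z K, k \o h = g /\ forall h' : Hom Z K, k \o h' = g -> h' = h.

Definition IsPullback {a b c P : C} (f : Hom a c) (g : Hom b c)
    (p1 : Hom P a) (p2 : Hom P b) : Prop :=
  f \o p1 = g \o p2 /\
  forall (Z : C) (x : Hom Z a) (y : Hom Z b), f \o x = g \o y ->
    exists h : Hom Z P, (p1 \o h = x /\ p2 \o h = y) /\
      forall h' : Hom Z P, p1 \o h' = x -> p2 \o h' = y -> h' = h.

Definition HasPullbacks : Prop :=
  forall (a b c : C) (f : Hom a c) (g : Hom b c),
    exists (P : C) (p1 : Hom P a) (p2 : Hom P b), IsPullback f g p1 p2.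

Definition FinitelyComplete : Prop :=
  (exists t : C, IsTerminal t) /\ HasPullbacks.

Definition IsCoequalizer {Z a b : C} (x y : Hom Z a) (q : Hom a b) : Prop :=
  q \o x = q \o y /\
  forall (W : C) (g : Hom a W), g \o x = g \o y ->
    exists h : Hom b W, h \o q = g /\ forall h' : Hom b W, h' \o q = g -> h' = h.

Definition RegularEpi {a b : C} (q : Hom a b) : Prop :=
  exists (Z : C) (x y : Hom Z a), IsCoequalizer x y q.

Record SplitExt (B X : C) := {
  se_A : C;
  se_k : Hom X se_A;
  se_a : Hom se_A B;
  se_b : Hom B se_A;
  se_ker : IsKernel se_k se_a;
  se_split : se_a \o se_b = idm B
}.

Definition SplExtIso {B X : C} (e e' : SplitExt B X) : Prop :=
  exists phi : Hom (se_A e) (se_A e'),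
    IsIso phi /\ phi \o se_k e = se_k e' /\ se_a e' \o phi = se_a e /\
    phi \o se_b e = se_b e'.

Definition PullbackOf {E B X : C} (e' : SplitExt E X) (e : SplitExt B X)
    (p : Hom E B) : Prop :=
  exists g : Hom (se_A e') (se_A e),
    IsPullback (se_a e) p g (se_a e') /\
    g \o se_b e' = se_b e \o p /\ g \o se_k e' = se_k e.

(* pointed protomodularity via the split short five lemma *)
Definition Protomodular : Prop :=
  forall (B B' X X' : C) (e : SplitExt B X) (e' : SplitExt B' X')
    (fk : Hom X X') (fa : Hom (se_A e) (se_A e')) (fb : Hom B B'),
    fa \o se_k e = se_k e' \o fk ->
    se_a e' \o fa = fb \o se_a e ->
    fa \o se_b e = se_b e' \o fb ->
    IsIso fk -> IsIso fb -> IsIso fa.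

(* (R, Phi) represents SplExt(-,X): Phi_B : hom(B,R) -> SplExt(B,X)/iso
   is a natural bijection (naturality w.r.t. pulling back). *)
Definition IsSplExtRepresentation (X R : C)
    (Phi : forall B : C, Hom B R -> SplitExt B X) : Prop :=
  (forall (B : C) (e : SplitExt B X), exists f : Hom B R, SplExtIso (Phi B f) e) /\
  (forall (B : C) (f g : Hom B R), SplExtIso (Phi B f) (Phi B g) -> f = g) /\
  (forall (E B : C) (p : Hom E B) (f : Hom B R), PullbackOf (Phi E (f \o p)) (Phi B f) p).

Definition SplExtRepresentable : Prop :=
  forall X : C, exists (R : C) (Phi : forall B : C, Hom B R -> SplitExt B X),
    IsSplExtRepresentation Phi.

Definition ActionRepresentable : Prop :=
  Pointed /\ FinitelyComplete /\ Protomodular /\ SplExtRepresentable.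

(* a monomorphism of functors SplExt(-,X) -> hom(-,M): a map on iso classes
   (iso-invariant), injective on iso classes, natural w.r.t. pullback *)
Definition WeaklyActionRepresentable : Prop :=
  forall X : C, exists (M : C) (tau : forall B : C, SplitExt B X -> Hom B M),
    (forall (B : C) (e e' : SplitExt B X), SplExtIso e e' -> tau B e = tau B e') /\
    (forall (B : C) (e e' : SplitExt B X), tau B e = tau B e' -> SplExtIso e e') /\
    (forall (E B : C) (p : Hom E B) (e : SplitExt B X) (e' : SplitExt E X),
        PullbackOf e' e p -> tau E e' = tau B e \o p).

Definition Amalgamable {S B B' : C} (m : Hom S B) (m' : Hom S B') : Prop :=
  exists (M : C) (i : Hom B M) (i' : Hom B' M), Mono i /\ Mono i' /\ i \o m = i' \o m'.

Definition Birkhoff (P : C -> Prop) : Prop :=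
  (forall c : C, exists (r : C) (eta : Hom c r), P r /\
      forall (y : C), P y -> forall g : Hom c y,
        exists h : Hom r y, h \o eta = g /\ forall h' : Hom r y, h' \o eta = g -> h' = h) /\
  (forall (a b : C) (m : Hom a b), Mono m -> P b -> P a) /\
  (forall (a b : C) (q : Hom a b), RegularEpi q -> P a -> P b).

End Notions.

Arguments Birkhoff : clear implicits.
Arguments ActionRepresentable : clear implicits.
Arguments WeaklyActionRepresentable : clear implicits.
Arguments SplExtRepresentable : clear implicits.
Arguments Pointed : clear implicits.
Arguments FinitelyComplete : clear implicits.
Arguments Protomodular : clear implicits.
Arguments HasPullbacks : clear implicits.

Definition FullSub (C : Cat) (P : C -> Prop) : Cat.
Proof.
  refine {| Ob := { c : C | P c };
            Hom := fun x y => @Hom C (proj1_sig x) (proj1_sig y);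
            idm := fun x => idm (proj1_sig x);
            comp := fun x y z g f => g \o f |}.
  - intros; apply comp_assoc.
  - intros; apply comp_id_l.
  - intros; apply comp_id_r.
Defined.
Arguments FullSub : clear implicits.

(* Main.v *)
Require Import Defs.
From Stdlib Require Import IndefiniteDescription.

Section Gen.
Variable C : Cat.

Lemma zero_mor_eq {a b : C} (f f' : Hom a b) : IsZeroMor f -> IsZeroMor f' -> f = f'.
Proof.
  intros [z [g [h [[zi zt] ->]]]] [z' [g' [h' [[zi' zt'] ->]]]].
  destruct (zi z') as [t _].
  assert (Eh : h = h' \o t).
  { destruct (zi b) as [w Hw]. rewrite (Hw h), (Hw (h' \o t)). reflexivity. }
  assert (Eg : t \o g = g').
  { destruct (zt' a) as [w Hw]. rewrite (Hw g'), (Hw (t \o g)). reflexivity. }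
  subst h. rewrite <- comp_assoc, Eg. reflexivity.
Qed.

Lemma sei_refl (B X : C) (e : SplitExt B X) : SplExtIso e e.
Proof.
  exists (idm _). split.
  - exists (idm _). split; apply comp_id_l.
  - split; [apply comp_id_l | split; [apply comp_id_r | apply comp_id_l]].
Qed.

Lemma sei_sym (B X : C) (e e' : SplitExt B X) : SplExtIso e e' -> SplExtIso e' e.
Proof.
  intros [phi [[psi [I1 I2]] [K [A Bq]]]].
  exists psi. split; [exists phi; split; assumption|].
  split; [|split].
  - rewrite <- K, comp_assoc, I1, comp_id_l. reflexivity.
  - rewrite <- A, <- comp_assoc, I2, comp_id_r. reflexivity.
  - rewrite <- Bq, comp_assoc, I1, comp_id_l. reflexivity.
Qed.

Lemma sei_trans (B X : C) (e e' e'' : SplitExt B X) :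
  SplExtIso e e' -> SplExtIso e' e'' -> SplExtIso e e''.
Proof.
  intros [phi [[psi [I1 I2]] [K [A Bq]]]] [phi' [[psi' [I1' I2']] [K' [A' Bq']]]].
  exists (phi' \o phi). split.
  - exists (psi \o psi'). split.
    + rewrite <- comp_assoc, (comp_assoc psi'), I1', comp_id_l, I1. reflexivity.
    + rewrite <- comp_assoc, (comp_assoc phi), I2, comp_id_l, I2'. reflexivity.
  - split; [|split].
    + rewrite <- comp_assoc, K, K'. reflexivity.
    + rewrite comp_assoc, A', A. reflexivity.
    + rewrite <- comp_assoc, Bq, Bq'. reflexivity.
Qed.

Lemma pb_iso (E B X : C) (p : Hom E B) (e e' : SplitExt B X) (e1 e2 : SplitExt E X) :
  PullbackOf e1 e p -> PullbackOf e2 e' p -> SplExtIso e e' -> SplExtIso e1 e2.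
Proof.
  intros [g1 [[Hc1 Hu1] [Hb1 Hk1]]] [g2 [[Hc2 Hu2] [Hb2 Hk2]]]
         [phi [[phii [I1 I2]] [K [A Bq]]]].
  assert (Ai : se_a e \o phii = se_a e').
  { rewrite <- A, <- comp_assoc, I2, comp_id_r. reflexivity. }
  assert (C1 : se_a e' \o (phi \o g1) = p \o se_a e1).
  { rewrite comp_assoc, A. exact Hc1. }
  destruct (Hu2 _ _ _ C1) as [psi [[P1 P2] _]].
  assert (C2 : se_a e \o (phii \o g2) = p \o se_a e2).
  { rewrite comp_assoc, Ai. exact Hc2. }
  destruct (Hu1 _ _ _ C2) as [psi' [[P1' P2'] _]].
  exists psi. split; [exists psi'; split|split; [|split]].
  - destruct (Hu1 _ _ _ Hc1) as [w [_ Uw]].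
    rewrite (Uw (psi' \o psi)), (Uw (idm _)); try reflexivity; try apply comp_id_r.
    + rewrite comp_assoc, P1', <- comp_assoc, P1, comp_assoc, I1, comp_id_l. reflexivity.
    + rewrite comp_assoc, P2', P2. reflexivity.
  - destruct (Hu2 _ _ _ Hc2) as [w [_ Uw]].
    rewrite (Uw (psi \o psi')), (Uw (idm _)); try reflexivity; try apply comp_id_r.
    + rewrite comp_assoc, P1, <- comp_assoc, P1', comp_assoc, I2, comp_id_l. reflexivity.
    + rewrite comp_assoc, P2, P2'. reflexivity.
  - assert (Z : se_a e1 \o se_k e1 = se_a e2 \o se_k e2).
    { apply zero_mor_eq; [apply (se_ker e1) | apply (se_ker e2)]. }
    assert (C3 : se_a e' \o se_k e' = p \o (se_a e2 \o se_k e2)).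
    { rewrite comp_assoc, <- Hc2, <- comp_assoc, Hk2. reflexivity. }
    destruct (Hu2 _ _ _ C3) as [w [_ Uw]].
    rewrite (Uw (psi \o se_k e1)), (Uw (se_k e2)); try reflexivity.
    + exact Hk2.
    + rewrite comp_assoc, P1, <- comp_assoc, Hk1, K. reflexivity.
    + rewrite comp_assoc, P2, Z. reflexivity.
  - exact P2.
  - assert (C3 : se_a e' \o (se_b e' \o p) = p \o (se_a e2 \o se_b e2)).
    { rewrite comp_assoc, (se_split e'), (se_split e2), comp_id_l, comp_id_r. reflexivity. }
    destruct (Hu2 _ _ _ C3) as [w [_ Uw]].
    rewrite (Uw (psi \o se_b e1)), (Uw (se_b e2)); try reflexivity.
    + exact Hb2.
    + rewrite comp_assoc, P1, <- comp_assoc, Hb1, comp_assoc, Bq. reflexivity.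
    + rewrite comp_assoc, P2, (se_split e1), (se_split e2). reflexivity.
Qed.

Lemma ser_war : SplExtRepresentable C -> WeaklyActionRepresentable C.
Proof.
  intros H X. destruct (H X) as [R [Phi [Hs [Hi Hn]]]].
  exists R.
  exists (fun B e => proj1_sig (constructive_indefinite_description _ (Hs B e))).
  assert (Spec : forall B e, SplExtIso (Phi B (proj1_sig (constructive_indefinite_description _ (Hs B e)))) e).
  { intros B e. exact (proj2_sig (constructive_indefinite_description _ (Hs B e))). }
  split; [|split].
  - intros B e e' Hee. apply Hi.
    eapply sei_trans; [apply Spec|]. eapply sei_trans; [exact Hee|]. apply sei_sym, Spec.
  - intros B e e' Heq. eapply sei_trans; [apply sei_sym, Spec|].
    rewrite Heq. apply Spec.
  - intros E B p e e' Hpb. apply Hi.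
    eapply sei_trans; [apply Spec|]. apply sei_sym.
    eapply pb_iso; [apply Hn | exact Hpb | apply Spec].
Qed.
End Gen.

Section Sub.
Variable C : Cat.
Variable P : C -> Prop.
Variable HP : Birkhoff C P.
Let F := FullSub C P.

Lemma pb_in_P (a b c Q : C) (f : Hom a c) (g : Hom b c) (p1 : Hom Q a) (p2 : Hom Q b) :
  IsPullback f g p1 p2 -> P a -> P b -> P c -> P Q.
Proof.
  destruct HP as [Hr [Hm _]]. intros [Hc Hu] Pa Pb Pc.
  destruct (Hr Q) as [r [eta [Pr Hf]]].
  destruct (Hf a Pa p1) as [h1 [E1 _]]. destruct (Hf b Pb p2) as [h2 [E2 _]].
  assert (H : f \o h1 = g \o h2).
  { destruct (Hf c Pc (f \o p1)) as [k [_ Uk]].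
    rewrite (Uk (f \o h1)), (Uk (g \o h2)); try reflexivity.
    - rewrite <- comp_assoc, E2, Hc. reflexivity.
    - rewrite <- comp_assoc, E1. reflexivity. }
  destruct (Hu r h1 h2 H) as [s [[S1 S2] _]].
  assert (Hid : s \o eta = idm Q).
  { destruct (Hu Q p1 p2 Hc) as [w [_ Uw]].
    rewrite (Uw (s \o eta)), (Uw (idm Q)); try reflexivity; try apply comp_id_r.
    - rewrite comp_assoc, S1, E1. reflexivity.
    - rewrite comp_assoc, S2, E2. reflexivity. }
  apply (Hm Q r eta); [| exact Pr].
  intros z x y Hxy.
  rewrite <- (comp_id_l x), <- (comp_id_l y), <- Hid, <- !comp_assoc, Hxy. reflexivity.
Qed.

Variable z0 : C.
Variable pz0 : P z0.
Variable hz0 : IsZeroObj z0.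

Lemma zeroF (z : C) (pz : P z) : IsZeroObj z -> @IsZeroObj F (exist _ z pz).
Proof.
  intros [zi zt]. split; intros [a pa].
  - destruct (zi a) as [f Hf]. exists f. exact Hf.
  - destruct (zt a) as [f Hf]. exists f. exact Hf.
Qed.

Lemma zm_CF (a b : F) (f : @Hom C (proj1_sig a) (proj1_sig b)) :
  @IsZeroMor C _ _ f -> @IsZeroMor F a b f.
Proof.
  intros Hz. destruct hz0 as [zi zt].
  destruct (zt (proj1_sig a)) as [g0 _]. destruct (zi (proj1_sig b)) as [h0 _].
  exists (exist _ z0 pz0). exists g0, h0. split; [apply zeroF; exact hz0|].
  simpl. apply zero_mor_eq; [assumption|].
  exists z0, g0, h0. split; [exact hz0 | reflexivity].
Qed.

Lemma zm_FC (a b : F) (f : @Hom C (proj1_sig a) (proj1_sig b)) :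
  @IsZeroMor F a b f -> @IsZeroMor C _ _ f.
Proof.
  intros [z [g [h [[zi zt] E]]]].
  pose (z0F := exist P z0 pz0 : F).
  destruct (zt z0F) as [t _]. destruct (zi z0F) as [j _].
  assert (Hid : @comp F _ _ _ t j = idm z).
  { destruct (zi z) as [w Hw]. rewrite (Hw (t \o j)), (Hw (idm z)). reflexivity. }
  simpl in *.
  exists z0, (j \o g), (h \o t). split; [exact hz0|].
  rewrite E, <- comp_assoc, (comp_assoc t j g), Hid, comp_id_l. reflexivity.
Qed.

Lemma ker_lift (K A B : F) (k : @Hom C (proj1_sig K) (proj1_sig A))
  (f : @Hom C (proj1_sig A) (proj1_sig B)) :
  @IsKernel C _ _ _ k f -> @IsKernel F K A B k f.
Proof.
  intros [Hz Hu]. split.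
  - apply zm_CF. exact Hz.
  - intros Z g Hg. apply zm_FC in Hg. destruct (Hu _ g Hg) as [h [Hh U]].
    exists h. split; [exact Hh | exact U].
Qed.

Definition liftSE (B X : F) (e : SplitExt (proj1_sig B) (proj1_sig X)) (pA : P (se_A e))
  : SplitExt B X :=
  @Build_SplitExt F B X (exist P (se_A e) pA : F) (se_k e) (se_a e) (se_b e)
     (ker_lift X (exist P (se_A e) pA) B _ _ (se_ker e)) (se_split e).

Lemma pbof_lift (E B X : F) (e' : SplitExt (proj1_sig E) (proj1_sig X))
  (e : SplitExt (proj1_sig B) (proj1_sig X)) (p : @Hom C (proj1_sig E) (proj1_sig B)) pA' pA :
  PullbackOf e' e p -> PullbackOf (liftSE E X e' pA') (liftSE B X e pA) p.
Proof.
  intros [g [[Hc Hu] [H1 H2]]]. exists g. split; [split|split]; try assumption.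
  intros Z x y Hxy. destruct (Hu (proj1_sig Z) x y Hxy) as [h [Hh U]].
  exists h. split; [exact Hh|]. intros h'. apply U.
Qed.

Lemma sei_down (B X : F) (e e' : SplitExt (proj1_sig B) (proj1_sig X)) pA pA' :
  SplExtIso (liftSE B X e pA) (liftSE B X e' pA') -> SplExtIso e e'.
Proof. intros H. exact H. Qed.

Lemma sei_up (B X : F) (e e' : SplitExt (proj1_sig B) (proj1_sig X)) pA pA' :
  SplExtIso e e' -> SplExtIso (liftSE B X e pA) (liftSE B X e' pA').
Proof. intros H. exact H. Qed.

End Sub.

Theorem proposition2p2 (C : Cat) (P : C -> Prop)
  (HC : ActionRepresentable C) (HP : Birkhoff C P)
  (S B B' : FullSub C P) (m : @Hom (FullSub C P) S B) (m' : @Hom (FullSub C P) S B')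
  (hm : Mono m) (hm' : Mono m')
  (D : C) (u : @Hom C (proj1_sig B) D) (u' : @Hom C (proj1_sig B') D)
  (hu : Mono u) (hu' : Mono u')
  (X : FullSub C P) (R : C)
  (Phi : forall Y : C, @Hom C Y R -> SplitExt Y (proj1_sig X))
  (HR : IsSplExtRepresentation Phi)
  (v : @Hom C D R) (hv : Mono v)
  (H1 : u \o (m : @Hom C (proj1_sig S) (proj1_sig B))
        = u' \o (m' : @Hom C (proj1_sig S) (proj1_sig B')))
  (H2 : ~ Amalgamable m m')
  (H3 : P (se_A (Phi (proj1_sig B) (v \o u))) /\ P (se_A (Phi (proj1_sig B') (v \o u')))) :
  ~ WeaklyActionRepresentable (FullSub C P) /\ ~ SplExtRepresentable (FullSub C P).
Proof.
  destruct HC as [[z [zi zt]] _].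
  assert (Hz0 : P z).
  { destruct HP as [_ [Hm _]]. destruct (zi (proj1_sig X)) as [f0 _]. apply (Hm z (proj1_sig X) f0).
    - intros w g h _. destruct (zt w) as [t Ht]. rewrite (Ht g), (Ht h). reflexivity.
    - exact (proj2_sig X). }
  assert (hz : IsZeroObj z) by (split; assumption).
  pose (L := liftSE C P z Hz0 hz).
  assert (NW : ~ WeaklyActionRepresentable (FullSub C P)).
  { intros W. destruct (W X) as [M [tau [Tinv [Tinj Tnat]]]].
    destruct HR as [_ [Hinj Hn]].
    assert (NG : forall (Y : FullSub C P) (f : @Hom C (proj1_sig Y) R) (pY : P (se_A (Phi _ f)))
              (Z : FullSub C P) (g : @Hom C (proj1_sig Z) (proj1_sig Y)),
              exists pZ, tau Z (L Z X (Phi _ (f \o g)) pZ) = @comp (FullSub C P) _ _ _ (tau Y (L Y X (Phi _ f) pY)) g).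
    { intros Y f pY Z g.
      assert (pZ : P (se_A (Phi _ (f \o g)))).
      { destruct (Hn _ _ g f) as [gg [Hpbk _]].
        exact (pb_in_P C P HP _ _ _ _ _ _ _ _ Hpbk pY (proj2_sig Z) (proj2_sig Y)). }
      exists pZ. apply Tnat. apply pbof_lift. apply Hn. }
    assert (II : forall (Z : FullSub C P) (f1 f2 : @Hom C (proj1_sig Z) R) p1 p2,
              f1 = f2 -> tau Z (L Z X (Phi _ f1) p1) = tau Z (L Z X (Phi _ f2) p2)).
    { intros Z f1 f2 p1 p2 ->. apply Tinv. apply sei_up. apply sei_refl. }
    assert (IJ : forall (Z : FullSub C P) (f1 f2 : @Hom C (proj1_sig Z) R) p1 p2,
              tau Z (L Z X (Phi _ f1) p1) = tau Z (L Z X (Phi _ f2) p2) -> f1 = f2).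
    { intros Z f1 f2 p1 p2 Heq. apply Hinj. eapply sei_down. apply Tinj. exact Heq. }
    destruct H3 as [pA1 pA2].
    set (i := tau B (L B X _ pA1)). set (i' := tau B' (L B' X _ pA2)).
    apply H2. exists M, i, i'. split; [|split].
    - intros Z g h Hgh.
      destruct (NG B _ pA1 Z g) as [pg Eg]. destruct (NG B _ pA1 Z h) as [ph Eh].
      fold i in Eg, Eh. rewrite <- Eg, <- Eh in Hgh. apply IJ in Hgh.
      rewrite <- !comp_assoc in Hgh. apply hv in Hgh. apply hu in Hgh. exact Hgh.
    - intros Z g h Hgh.
      destruct (NG B' _ pA2 Z g) as [pg Eg]. destruct (NG B' _ pA2 Z h) as [ph Eh].
      fold i' in Eg, Eh. rewrite <- Eg, <- Eh in Hgh. apply IJ in Hgh.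
      rewrite <- !comp_assoc in Hgh. apply hv in Hgh. apply hu' in Hgh. exact Hgh.
    - destruct (NG B _ pA1 S m) as [pS E1]. destruct (NG B' _ pA2 S m') as [pS' E2].
      fold i in E1. fold i' in E2. rewrite <- E1, <- E2. apply II.
      rewrite <- !comp_assoc. simpl in H1. rewrite H1. reflexivity. }
  split; [exact NW|]. intros HS. apply NW. apply ser_war. exact HS.
Qed.
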